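(* Let $G$ be a mixed graph with short and long arcs. Then $G$ contains neither a directed long cycle nor a directed short cycle if and only if there exist mappings $\sigma_1,\sigma_2:V(G)\to\mathbb{N}$ such that: (1) for all $u,v\in V(G)$, $u$ and $v$ are connected by an undirected walk if and only if $(\sigma_1(u),\sigma_2(u))=(\sigma_1(v),\sigma_2(v))$; (2) for all $u,v\in V(G)$, there is a walk from $u$ to $v$ in $G$ using only edges and short arcs if and only if $\sigma_1(u)=\sigma_1(v)$; (3) for all $u,v\in V(G)$, if there is a directed short walk from $u$ to $v$ in $G$ then $\sigma_2(u)<\sigma_2(v)$; (4) for all $u,v\in V(G)$, if there is a directed long walk from $u$ to $v$ in $G$ then $\sigma_1(u)<\sigma_1(v)$.
   Context: A mixed graph $G$ has vertices, undirected edges $E(G)$ and arcs $A(G)$, where $A(G)$ is partitioned into short arcs and long arcs. A walk is a sequence $v_0,e_1,v_1,\dots,e_\ell,v_\ell$ ($\ell\ge0$) where each $e_i$ is an edge or arc joining $v_{i-1}$ and $v_i$; arcs may be traversed in either direction. A walk is undirected if it contains only edges, short if it contains a short arc but no long arc, and long if it contains a long arc. A walk from $u$ to $v$ is directed if either it is short and every short arc on it is traversed from tail to head, or it is long and every long arc on it is traversed from tail to head (short arcs then arbitrary). A cycle is a closed walk ($\ell\ge1$, $v_\ell=v_0$) with distinct $v_0,\dots,v_{\ell-1}$ and distinct $e_1,\dots,e_\ell$; it is directed short (resp. long) if it is a directed short (resp. long) walk. *)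

(* Defs.v *)
From HB Require Import structures.
From mathcomp Require Import all_boot.
Set Implicit Arguments. Unset Strict Implicit. Unset Printing Implicit Defensive.

Inductive ekind := Edge | ShortArc | LongArc.

Definition ekind_eqb (a b : ekind) : bool :=
  match a, b with
  | Edge, Edge | ShortArc, ShortArc | LongArc, LongArc => true
  | _, _ => false end.
Lemma ekind_eqP : Equality.axiom ekind_eqb.
Proof. by case; case; constructor. Qed.
HB.instance Definition _ := hasDecEq.Build ekind ekind_eqP.

(* Every link e joins src e and tgt e; for an arc, src e is the tail and
   tgt e the head; for an undirected edge the orientation is irrelevant. *)
Record mgraph (V E : finType) := MGraph {
  src : E -> V;
  tgt : E -> V;
  kind : E -> ekind }.

Section Walks.
Variables (V E : finType) (G : mgraph V E).

(* A walk is given by its start vertex and a sequence of steps (e, b):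
   b = true means e is traversed from src e to tgt e, b = false the reverse. *)
Definition sfrom (p : E * bool) : V := if p.2 then src G p.1 else tgt G p.1.
Definition sto   (p : E * bool) : V := if p.2 then tgt G p.1 else src G p.1.

Fixpoint is_walk (x : V) (s : seq (E * bool)) (y : V) : bool :=
  match s with
  | [::] => x == y
  | p :: s' => (sfrom p == x) && is_walk (sto p) s' y
  end.

Definition isE (p : E * bool) := kind G p.1 == Edge.
Definition isS (p : E * bool) := kind G p.1 == ShortArc.
Definition isL (p : E * bool) := kind G p.1 == LongArc.

Definition undirected_walk (s : seq (E * bool)) := all isE s.
Definition short_walk (s : seq (E * bool)) := has isS s && ~~ has isL s.
Definition long_walk (s : seq (E * bool)) := has isL s.

Definition directed (s : seq (E * bool)) :=
  (short_walk s && all (fun p => isS p ==> p.2) s)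
  || (long_walk s && all (fun p => isL p ==> p.2) s).

Definition directed_short_walk s := short_walk s && directed s.
Definition directed_long_walk s := long_walk s && directed s.

(* a cycle: closed walk of length >= 1 with distinct v_0..v_{l-1}
   (the start vertices of the steps) and distinct links e_1..e_l *)
Definition is_cycle (x : V) (s : seq (E * bool)) :=
  [&& 0 < size s, is_walk x s x, uniq (map sfrom s) & uniq (map fst s)].

Definition has_directed_short_cycle :=
  exists x s, is_cycle x s /\ directed_short_walk s.
Definition has_directed_long_cycle :=
  exists x s, is_cycle x s /\ directed_long_walk s.

End Walks.

(* Main.v *)
From Stdlib Require Import ClassicalEpsilon.
Require Import Defs.
From mathcomp Require Import all_boot.
From mathcomp Require Import zify.
Set Implicit Arguments. Unset Strict Implicit. Unset Printing Implicit Defensive.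

Definition pb (P : Prop) : bool := if excluded_middle_informative P then true else false.
Lemma pbP P : reflect P (pb P).
Proof. rewrite /pb; case: excluded_middle_informative => H; by constructor. Qed.

Lemma gen_sigma (T : finType) (Q R : T -> T -> Prop) :
  (forall u, Q u u) -> (forall u v, Q u v -> Q v u) ->
  (forall u v w, Q u v -> Q v w -> Q u w) ->
  (forall u v w, R u v -> R v w -> R u w) -> (forall u, ~ R u u) ->
  (forall w u v, R w u -> Q u v -> R w v) ->
  exists sg : T -> nat, (forall u v, Q u v <-> sg u = sg v) /\
                        (forall u v, R u v -> sg u < sg v).
Proof.
move=> Qr Qs Qt Rt Ri RQ.
pose cls u := [set w | pb (Q w u)].
pose cnt u := #|[set w | pb (R w u)]|.
pose N := #|{set T}|.
have ltN : forall x, (enum_rank (cls x) : nat) < N by move=> x; exact: ltn_ord.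
exists (fun u => N * cnt u + enum_rank (cls u)). split.
- move=> u v; split => [Huv|Heq].
  + have -> : cls u = cls v.
      rewrite /cls; apply/setP => w; rewrite !inE; apply/pbP/pbP => H; eauto.
    have -> : cnt u = cnt v.
      rewrite /cnt; apply: eq_card => w; rewrite !inE; apply/pbP/pbP => H; eauto.
    done.
  + have := congr1 (modn^~ N) Heq; rewrite /= ![N * _]mulnC !modnMDl !modn_small //.
    move=> /val_inj /enum_rank_inj Hc.
    have : u \in cls u by rewrite inE; apply/pbP.
    by rewrite Hc inE => /pbP.
- move=> u v Ruv.
  have : cnt u < cnt v.
    apply: proper_card; apply/properP; split.
    + apply/subsetP => w; rewrite !inE => /pbP H; apply/pbP; eauto.
    + exists u; rewrite !inE; [apply/pbP; exact: Ruv | apply/negP => /pbP; exact: Ri].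
  move: (ltN u) => h1 h2. nia.
Qed.

Section Proof.
Variables (V E : finType) (G : mgraph V E).

Lemma walk_cat x s1 y s2 z : is_walk G x s1 y -> is_walk G y s2 z ->
  is_walk G x (s1 ++ s2) z.
Proof.
elim: s1 x => [|p s1 IH] x /=; first by move/eqP->.
by case/andP=> -> /IH H /H.
Qed.

Lemma walk_split x s1 s2 z : is_walk G x (s1 ++ s2) z ->
  exists y, is_walk G x s1 y /\ is_walk G y s2 z.
Proof.
elim: s1 x => [|p s1 IH] x /=; first by exists x; rewrite eqxx.
case/andP=> /eqP <- /IH [y [H1 H2]]; exists y; by rewrite eqxx H1.
Qed.

Definition flip (p : E * bool) := (p.1, ~~ p.2).
Lemma flipK p : flip (flip p) = p. Proof. by case: p => e []. Qed.
Lemma sfrom_flip p : sfrom G (flip p) = sto G p. Proof. by case: p => e []. Qed.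
Lemma sto_flip p : sto G (flip p) = sfrom G p. Proof. by case: p => e []. Qed.

Lemma walk_rev x s y : is_walk G x s y -> is_walk G y (rev (map flip s)) x.
Proof.
elim: s x => [|p s IH] x /=; first by move/eqP->; rewrite eqxx.
case/andP=> /eqP Hx /IH H. rewrite rev_cons -cats1. apply: walk_cat H _.
by rewrite /= sfrom_flip sto_flip Hx !eqxx.
Qed.

Definition qS (p : E * bool) := ~~ isL G p && (isS G p ==> p.2).
Definition qL (p : E * bool) := isL G p ==> p.2.

Lemma dsw_char s : directed_short_walk G s = has (isS G) s && all qS s.
Proof.
rewrite /directed_short_walk /directed /short_walk /long_walk.
rewrite (eq_all (a1 := qS) (a2 := predI (predC (isL G)) (fun p => isS G p ==> p.2))) //.
rewrite all_predI all_predC.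
set a := has _ s; set b := has _ s; set c := all _ s; set d := all _ s.
by case: a; case: b; case: c; case: d.
Qed.

Lemma dlw_char s : directed_long_walk G s = has (isL G) s && all qL s.
Proof.
rewrite /directed_long_walk /directed /short_walk /long_walk.
set a := has _ s; set b := has _ s; set c := all _ s; set d := all _ s.
by case: a; case: b; case: c; case: d.
Qed.

Lemma nuniq_split (T : eqType) (f : E * bool -> T) s : ~~ uniq (map f s) ->
  exists s1 p s2 p' s3, s = s1 ++ p :: s2 ++ p' :: s3 /\ f p = f p'.
Proof.
elim: s => [|p s IH] //=. rewrite negb_and negbK. case/orP.
- case/mapP => p' Hp' Hf. case/splitPr: Hp' => s2 s3.
  by exists [::], p, s2, p', s3.
- case/IH => s1 [q [s2 [q' [s3 [-> Hq]]]]].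
  by exists (p :: s1), q, s2, q', s3.
Qed.

Section Extract.
Variables (q h : pred (E * bool)).
Hypothesis hq : forall p, h p -> q p -> q (flip p) -> False.
Definition Goal := exists y t, is_cycle G y t /\ all q t /\ has h t.

Lemma step_v n (IH : forall x s, size s <= n -> is_walk G x s x -> all q s ->
   has h s -> Goal) x s1 p s2 p' s3 :
  sfrom G p = sfrom G p' -> size (s1 ++ p :: s2 ++ p' :: s3) <= n.+1 ->
  is_walk G x (s1 ++ p :: s2 ++ p' :: s3) x ->
  all q (s1 ++ p :: s2 ++ p' :: s3) -> has h (s1 ++ p :: s2 ++ p' :: s3) -> Goal.
Proof.
move=> Hf Hn Hw Hq Hh.
have [y [Hw1 Hw2]] := walk_split Hw.
have [z [Hw3 Hw4]] := walk_split (Hw2 : is_walk G y ((p :: s2) ++ (p' :: s3)) x).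
have Eyz : y = z.
  move: Hw3 Hw4 => /=; case/andP => /eqP <- _; case/andP => /eqP <- _; exact: Hf.
subst z.
move: Hn; rewrite !size_cat /= size_cat /= => Hn.
move: Hq Hh; rewrite !all_cat !has_cat /= !all_cat !has_cat /=.
case/and5P => q1 qp q2 qp' q3.
case hA: (h p || has h s2).
- move=> _; apply: (IH y (p :: s2)) => //; first by rewrite /=; clear -Hn; lia.
  by rewrite /= qp q2.
- move=> Hh; apply: (IH y ((p' :: s3) ++ s1)).
  + rewrite size_cat /=; clear -Hn; lia.
  + exact: walk_cat Hw4 Hw1.
  + by rewrite all_cat /= qp' q3 q1.
  + rewrite has_cat /=. move: Hh hA.
    by case: (has h s1); case: (h p); case: (has h s2); case: (h p'); case: (has h s3).
Qed.

Lemma step_f n (IH : forall x s, size s <= n -> is_walk G x s x -> all q s ->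
   has h s -> Goal) x s1 p s2 s3 :
  size (s1 ++ p :: s2 ++ flip p :: s3) <= n.+1 ->
  is_walk G x (s1 ++ p :: s2 ++ flip p :: s3) x ->
  all q (s1 ++ p :: s2 ++ flip p :: s3) -> has h (s1 ++ p :: s2 ++ flip p :: s3) -> Goal.
Proof.
move=> Hn Hw Hq Hh.
have [y [Hw1 /= /andP [/eqP Ey Hw2]]] := walk_split Hw.
have [z [Hw3 /= /andP [/eqP Ez Hw4]]] := walk_split Hw2.
rewrite sfrom_flip in Ez; subst z.
rewrite sto_flip Ey in Hw4.
move: Hn; rewrite !size_cat /= size_cat /= => Hn.
move: Hq Hh; rewrite !all_cat !has_cat /= !all_cat !has_cat /=.
case/and5P => q1 qp q2 qp' q3.
case hp: (h p); first by move: (hq hp qp qp').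
case hp': (h (flip p)); first by move: (hq hp' qp'); rewrite flipK => /(_ qp).
case hA: (has h s2).
- move=> _; apply: (IH (sto G p) s2) => //; clear -Hn; lia.
- move=> Hh; apply: (IH y (s3 ++ s1)).
  + rewrite size_cat /=; clear -Hn; lia.
  + exact: walk_cat Hw4 Hw1.
  + by rewrite all_cat q3 q1.
  + rewrite has_cat /=. move: Hh. by case: (has h s1); case: (has h s3).
Qed.

Lemma extract n x s : size s <= n -> is_walk G x s x -> all q s -> has h s -> Goal.
Proof.
elim: n x s => [|n IH] x s.
  by rewrite leqn0 => /nilP ->.
move=> Hn Hw Hq Hh.
case U1: (uniq (map (sfrom G) s)); last first.
  have [s1 [p [s2 [p' [s3 [Es Hf]]]]]] := nuniq_split (negbT U1). subst s.
  exact: (@step_v n IH x s1 p s2 p' s3 Hf Hn Hw Hq Hh).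
case U2: (uniq (map fst s)); last first.
  have [s1 [p [s2 [p' [s3 [Es Hf]]]]]] := nuniq_split (negbT U2). subst s.
  move: Hf Hn Hw Hq Hh; clear U1 U2; case: p => e b; case: p' => e' b' /= <-.
  case: b; case: b' => Hn Hw Hq Hh.
  - exact: (@step_v n IH x s1 (e,true) s2 (e,true) s3 erefl Hn Hw Hq Hh).
  - exact: (@step_f n IH x s1 (e,true) s2 s3 Hn Hw Hq Hh).
  - exact: (@step_f n IH x s1 (e,false) s2 s3 Hn Hw Hq Hh).
  - exact: (@step_v n IH x s1 (e,false) s2 (e,false) s3 erefl Hn Hw Hq Hh).
exists x, s; split => //.
by rewrite /is_cycle Hw U1 U2 andbT; case: s Hh {Hn Hw Hq U1 U2}.
Qed.
End Extract.

Definition Urel u v := exists s, is_walk G u s v /\ undirected_walk G s.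
Definition Wrel u v := exists s, is_walk G u s v /\ all (fun p => ~~ isL G p) s.
Definition DSrel u v := exists s, is_walk G u s v /\ directed_short_walk G s.
Definition DLrel u v := exists s, is_walk G u s v /\ directed_long_walk G s.


Lemma kindE p : isE G p -> ~~ isL G p && ~~ isS G p.
Proof. by rewrite /isE /isL /isS; case: (kind G p.1). Qed.

Lemma U_refl u : Urel u u.
Proof. by exists [::]; rewrite /= eqxx. Qed.
Lemma U_sym u v : Urel u v -> Urel v u.
Proof.
case=> s [Hw Ha]; exists (rev (map flip s)); split; first exact: walk_rev.
by rewrite /undirected_walk all_rev all_map.
Qed.
Lemma U_trans u v w : Urel u v -> Urel v w -> Urel u w.
Proof.
case=> s [Hw Ha] [t [Hw' Ha']]; exists (s ++ t); split; first exact: walk_cat Hw Hw'.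
by rewrite /undirected_walk all_cat; apply/andP.
Qed.
Lemma W_refl u : Wrel u u.
Proof. by exists [::]; rewrite /= eqxx. Qed.
Lemma W_sym u v : Wrel u v -> Wrel v u.
Proof.
case=> s [Hw Ha]; exists (rev (map flip s)); split; first exact: walk_rev.
by rewrite all_rev all_map.
Qed.
Lemma W_trans u v w : Wrel u v -> Wrel v w -> Wrel u w.
Proof.
case=> s [Hw Ha] [t [Hw' Ha']]; exists (s ++ t); split; first exact: walk_cat Hw Hw'.
by rewrite all_cat Ha Ha'.
Qed.
Lemma UW u v : Urel u v -> Wrel u v.
Proof.
case=> s [Hw Ha]; exists s; split => //; apply/allP => p /(allP Ha) /kindE.
by case/andP.
Qed.

Lemma DS_trans u v w : DSrel u v -> DSrel v w -> DSrel u w.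
Proof.
case=> s [Hw Ha] [t [Hw' Ha']]; exists (s ++ t); split; first exact: walk_cat Hw Hw'.
move: Ha Ha'; rewrite !dsw_char has_cat all_cat => /andP[-> ->] /andP[_ ->].
by [].
Qed.
Lemma DS_U w u v : DSrel w u -> Urel u v -> DSrel w v.
Proof.
case=> s [Hw Ha] [t [Hw' Ha']]; exists (s ++ t); split; first exact: walk_cat Hw Hw'.
move: Ha; rewrite !dsw_char has_cat all_cat => /andP[-> ->] /=.
apply/allP => p /(allP Ha') /kindE /andP [H1 H2].
by rewrite /qS H1 (negbTE H2).
Qed.
Lemma DL_trans u v w : DLrel u v -> DLrel v w -> DLrel u w.
Proof.
case=> s [Hw Ha] [t [Hw' Ha']]; exists (s ++ t); split; first exact: walk_cat Hw Hw'.
move: Ha Ha'; rewrite !dlw_char has_cat all_cat => /andP[-> ->] /andP[_ ->].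
by [].
Qed.
Lemma DL_W w u v : DLrel w u -> Wrel u v -> DLrel w v.
Proof.
case=> s [Hw Ha] [t [Hw' Ha']]; exists (s ++ t); split; first exact: walk_cat Hw Hw'.
move: Ha; rewrite !dlw_char has_cat all_cat => /andP[-> ->] /=.
apply/allP => p /(allP Ha') H.
by rewrite /qL (negbTE H).
Qed.

Lemma DS_irr : ~ has_directed_short_cycle G -> forall u, ~ DSrel u u.
Proof.
move=> noS u [s [Hw Ha]]; move: Ha; rewrite dsw_char => /andP [Hh Hq].
have hq : forall p, isS G p -> qS p -> qS (flip p) -> False.
  by move=> [e b]; rewrite /qS /isS /isL /=; case: (kind G e) => //=; case: b.
have [y [t [Hc [Hq' Hh']]]] := extract hq (leqnn _) Hw Hq Hh.
by apply: noS; exists y, t; split => //; rewrite dsw_char Hh' Hq'.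
Qed.
Lemma DL_irr : ~ has_directed_long_cycle G -> forall u, ~ DLrel u u.
Proof.
move=> noL u [s [Hw Ha]]; move: Ha; rewrite dlw_char => /andP [Hh Hq].
have hq : forall p, isL G p -> qL p -> qL (flip p) -> False.
  by move=> [e b]; rewrite /qL /isL /=; case: (kind G e) => //=; case: b.
have [y [t [Hc [Hq' Hh']]]] := extract hq (leqnn _) Hw Hq Hh.
by apply: noL; exists y, t; split => //; rewrite dlw_char Hh' Hq'.
Qed.

End Proof.

Theorem mainTheorem15 (V E : finType) (G : mgraph V E) :
  (~ has_directed_long_cycle G /\ ~ has_directed_short_cycle G) <->
  (exists sigma1 sigma2 : V -> nat,
    [/\ (forall u v : V,
           (exists s, is_walk G u s v /\ undirected_walk G s) <->
           (sigma1 u, sigma2 u) = (sigma1 v, sigma2 v)),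
        (forall u v : V,
           (exists s, is_walk G u s v /\ all (fun p => ~~ isL G p) s) <->
           sigma1 u = sigma1 v),
        (forall u v : V,
           (exists s, is_walk G u s v /\ directed_short_walk G s) ->
           sigma2 u < sigma2 v)
      & (forall u v : V,
           (exists s, is_walk G u s v /\ directed_long_walk G s) ->
           sigma1 u < sigma1 v)]).
Proof.
split.
- case=> noL noS.
  have [s1 [H1a H1b]] := @gen_sigma V (Wrel G) (DLrel G) (@W_refl _ _ G)
    (@W_sym _ _ G) (@W_trans _ _ G) (@DL_trans _ _ G) (DL_irr noL) (@DL_W _ _ G).
  have [s2 [H2a H2b]] := @gen_sigma V (Urel G) (DSrel G) (@U_refl _ _ G)
    (@U_sym _ _ G) (@U_trans _ _ G) (@DS_trans _ _ G) (DS_irr noS) (@DS_U _ _ G).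
  exists s1, s2; split.
  + move=> u v; split.
    * move=> H; have H' : Urel G u v by [].
      by rewrite (proj1 (H1a u v) (UW H')) (proj1 (H2a u v) H').
    * by case=> _ /(H2a u v).
  + exact: H1a.
  + exact: H2b.
  + exact: H1b.
- case=> s1 [s2 [H1 H2 H3 H4]]; split.
  + case=> x [s [Hc Hd]].
    have Hw : is_walk G x s x by case/and4P: Hc.
    by have := H4 x x (ex_intro _ s (conj Hw Hd)); rewrite ltnn.
  + case=> x [s [Hc Hd]].
    have Hw : is_walk G x s x by case/and4P: Hc.
    by have := H3 x x (ex_intro _ s (conj Hw Hd)); rewrite ltnn.
Qed.
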